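(* Let $(E\to M,\rho,\langle\cdot,\cdot\rangle,\circ)$ be a Courant algebroid, $(\mathbf I,\mathbf J,\mathbf K)$ an almost hypercomplex structure on $E$, and let $\nabla$ be the hypercomplex connection $$\nabla_XY=-\tfrac12\mathbf K\big(\mathbf JY\circ\mathbf IX-\mathbf J(Y\circ\mathbf IX)-\mathbf I(\mathbf JY\circ X)+\mathbf J\mathbf I(Y\circ X)\big).$$ Then for all $X,Y\in\Gamma(E)$: (a) $\nabla_X\mathbf J=0$; (b) $(\nabla_X\mathbf I)Y=\tfrac12\mathbf K N_{\mathbf I,\mathbf J}(X,\mathbf IY)+\tfrac12\mathbf J N_{\mathbf I,\mathbf J}(X,Y)$; (c) $X\circ Y+\tfrac12\mathbf K N_{\mathbf I,\mathbf J}(X,Y)=\nabla_XY-\nabla_YX+D\langle X,Y\rangle-\big(\mathbf ID\langle X,\mathbf IY\rangle+\mathbf JD\langle X,\mathbf JY\rangle+\mathbf KD\langle X,\mathbf KY\rangle\big)$.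
   Context: A Courant algebroid $(E\to M,\rho,\langle\cdot,\cdot\rangle,\circ)$ consists of a real vector bundle $E\to M$ over a smooth manifold, a nondegenerate symmetric fiberwise bilinear pairing $\langle\cdot,\cdot\rangle$ on $E$, a vector bundle map $\rho:E\to TM$ (the anchor), and an $\mathbb R$-bilinear operation $\circ$ on $\Gamma(E)$ (the Dorfman bracket) such that for all $f\in C^\infty(M)$, $x,y,z\in\Gamma(E)$: $x\circ(y\circ z)=(x\circ y)\circ z+y\circ(x\circ z)$; $\rho(x\circ y)=[\rho(x),\rho(y)]$; $x\circ(fy)=(\rho(x)f)y+f(x\circ y)$; $x\circ y+y\circ x=2D\langle x,y\rangle$; $(Df)\circ x=0$; $\rho(x)\langle y,z\rangle=\langle x\circ y,z\rangle+\langle y,x\circ z\rangle$. Here $D:C^\infty(M)\to\Gamma(E)$ is the $\mathbb R$-linear map defined by $\langle Df,x\rangle=\tfrac12\rho(x)f$. For vector bundle endomorphisms $F,G$ of $E$ (over $\mathrm{id}_M$), the Nijenhuis concomitant is the tensor $N_{F,G}:E\otimes E\to E$ given by $N_{F,G}(X,Y)=FX\circ GY-F(X\circ GY)-G(FX\circ Y)+FG(X\circ Y)+GX\circ FY-G(X\circ FY)-F(GX\circ Y)+GF(X\circ Y)$. An almost hypercomplex structure on $E$ is a triple $(\mathbf I,\mathbf J,\mathbf K)$ of vector bundle endomorphisms of $E$ over $\mathrm{id}_M$, each orthogonal for $\langle\cdot,\cdot\rangle$, with $\mathbf I^2=\mathbf J^2=\mathbf K^2=\mathbf I\mathbf J\mathbf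 K=-1$. Given an almost hypercomplex structure, for $f\in C^\infty(M)$ and $X,Y\in\Gamma(E)$ set $\Delta_f(X,Y)=\langle X,Y\rangle Df+\langle\mathbf IX,Y\rangle\mathbf I Df+\langle\mathbf JX,Y\rangle\mathbf JDf+\langle\mathbf KX,Y\rangle\mathbf KDf$. A hypercomplex connection is an $\mathbb R$-bilinear map $\Gamma(E)\times\Gamma(E)\to\Gamma(E)$, $(X,Y)\mapsto\nabla_XY$, with $\nabla_{fX}Y=f\nabla_XY$ and $\nabla_X(fY)=(\rho(X)f)Y+f\nabla_XY-\Delta_f(X,Y)$. For an endomorphism $P$ of $E$, $(\nabla_XP)Y:=\nabla_X(PY)-P(\nabla_XY)$, and $\nabla_XP=0$ means this vanishes for all $Y$. *)

(* Defs.v *)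
(* Algebraic model of a Courant algebroid:
   R       : the scalar field (R = the reals in the paper; any numFieldType here),
   F       : the commutative R-algebra C^oo(M),
   V       : the F-module Gamma(E) of sections,
   rho     : V -> (F -> F)  the anchor, rho x acting on functions as a vector field,
   pair    : V -> V -> F    the pairing <.,.>,
   circ    : V -> V -> V    the Dorfman bracket,
   D       : F -> V         the map D with <Df,x> = 1/2 rho(x) f.
   Vector bundle endomorphisms over id_M are F-linear maps V -> V. *)
From HB Require Import structures.
From mathcomp Require Import all_boot all_order all_algebra.
Set Implicit Arguments. Unset Strict Implicit. Unset Printing Implicit Defensive.
Import Order.TTheory GRing.Theory Num.Theory.
Local Open Scope ring_scope.

Section Defs.
Variables (R : numFieldType) (F : comAlgType R) (V : lmodType F).

Definition fhalf : F := (2%:R^-1 : R)%:A.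

Definition bundle_endo (P : V -> V) : Prop :=
  forall (a : F) (x y : V), P (a *: x + y) = a *: P x + P y.

Definition is_courant_algebroid (rho : V -> F -> F) (pair : V -> V -> F)
    (circ : V -> V -> V) (D : F -> V) : Prop :=
  ((forall x y, pair x y = pair y x) /\
      (forall (a : F) x y z, pair (a *: x + y) z = a * pair x z + pair y z) /\
      (forall y, (forall x, pair x y = 0) -> y = 0)) /\
  ((
      forall (a : F) x y f, rho (a *: x + y) f = a * rho x f + rho y f) /\
      (forall x (c : R) f g, rho x (c *: f + g) = c *: rho x f + rho x g) /\
      (forall x f g, rho x (f * g) = rho x f * g + f * rho x g)) /\
  (
      (forall (c : R) x y z, circ (c%:A *: x + y) z = c%:A *: circ x z + circ y z) /\
      (forall (c : R) x y z, circ x (c%:A *: y + z) = c%:A *: circ x y + circ x z)) /\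
  ((forall x y z, circ x (circ y z) = circ (circ x y) z + circ y (circ x z)) /\
      (forall x y f, rho (circ x y) f = rho x (rho y f) - rho y (rho x f)) /\
      (forall x y (f : F), circ x (f *: y) = rho x f *: y + f *: circ x y) /\
      (forall x y, circ x y + circ y x = 2%:R *: D (pair x y)) /\
      (forall f x, circ (D f) x = 0) /\
      (forall x y z, rho x (pair y z) = pair (circ x y) z + pair y (circ x z))) /\
      (forall f x, pair (D f) x = fhalf * rho x f).

Definition almost_hypercomplex (pair : V -> V -> F) (I J K : V -> V) : Prop :=
  [/\ [/\ bundle_endo I, bundle_endo J & bundle_endo K],
      (forall x y, pair (I x) (I y) = pair x y),
      (forall x y, pair (J x) (J y) = pair x y),
      (forall x y, pair (K x) (K y) = pair x y) &
      [/\ (forall x, I (I x) = - x), (forall x, J (J x) = - x),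
          (forall x, K (K x) = - x) & (forall x, I (J (K x)) = - x)]].

Definition nijenhuis (circ : V -> V -> V) (P Q : V -> V) (X Y : V) : V :=
  circ (P X) (Q Y) - P (circ X (Q Y)) - Q (circ (P X) Y) + P (Q (circ X Y))
  + circ (Q X) (P Y) - Q (circ X (P Y)) - P (circ (Q X) Y) + Q (P (circ X Y)).

Definition hc_nabla (circ : V -> V -> V) (I J K : V -> V) (X Y : V) : V :=
  - (fhalf *: K (circ (J Y) (I X) - J (circ Y (I X)) - I (circ (J Y) X)
                + J (I (circ Y X)))).

Definition covd (nabla : V -> V -> V) (P : V -> V) (X Y : V) : V :=
  nabla X (P Y) - P (nabla X Y).

End Defs.

(* Main.v *)
Require Import Defs.
From HB Require Import structures.
From mathcomp Require Import all_boot all_order all_algebra.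
Import GRing.Theory Num.Theory.
Local Open Scope ring_scope.

Inductive zx := ZV of nat | Z0 | ZA of zx & zx | ZN of zx.

Fixpoint addl (l1 l2 : seq int) : seq int :=
  match l1, l2 with
  | [::], _ => l2
  | _, [::] => l1
  | a :: l1', b :: l2' => (a + b) :: addl l1' l2'
  end.
Definition single (n : nat) : seq int := rcons (nseq n 0) 1.
Fixpoint znf e : seq int :=
  match e with
  | ZV n => single n | Z0 => [::]
  | ZA a b => addl (znf a) (znf b)
  | ZN a => map (fun c => - c) (znf a)
  end.

Section Z.
Variable V : zmodType.
Fixpoint zev (env : seq V) e : V :=
  match e with
  | ZV n => nth 0 env n | Z0 => 0
  | ZA a b => zev env a + zev env b
  | ZN a => - zev env a
  end.
Fixpoint lev (env : seq V) (l : seq int) n : V :=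
  match l with [::] => 0 | c :: l' => nth 0 env n *~ c + lev env l' n.+1 end.

Lemma lev_add env l1 l2 n : lev env (addl l1 l2) n = lev env l1 n + lev env l2 n.
Proof.
elim: l1 l2 n => [|a l1 IH] [|b l2] n /=; rewrite ?add0r ?addr0 //.
by rewrite IH mulrzDr addrACA.
Qed.
Lemma lev_opp env l n : lev env (map (fun c => - c) l) n = - lev env l n.
Proof. by elim: l n => [|a l IH] n /=; rewrite ?oppr0 // IH mulrNz opprD. Qed.
Lemma lev_single env k n : lev env (single k) n = nth 0 env (k + n).
Proof.
elim: k n => [|k IH] n /=; first by rewrite mulr1z addr0.
by rewrite mulr0z add0r IH addSnnS.
Qed.
Lemma zev_lev env e : zev env e = lev env (znf e) 0.
Proof.
elim: e => [k||a IHa b IHb|a IH] /=.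
- by rewrite lev_single addn0.
- by [].
- by rewrite lev_add IHa IHb.
- by rewrite lev_opp IH.
Qed.
Lemma lev_all0 env l n : all (fun c => c == 0) l -> lev env l n = 0.
Proof.
elim: l n => [|a l IH] n //= /andP[/eqP -> H].
by rewrite mulr0z add0r IH.
Qed.
Lemma zsound env e1 e2 :
  all (fun c => c == 0) (znf (ZA e1 (ZN e2))) -> zev env e1 = zev env e2.
Proof.
move=> H; apply/eqP; rewrite -subr_eq0.
have := zev_lev env (ZA e1 (ZN e2)) => /= ->.
by rewrite lev_all0.
Qed.
End Z.

Ltac zlookup t l :=
  lazymatch l with
  | ?u :: ?l' =>
     match constr:(tt) with
     | _ => let _ := constr:(@erefl _ t : t = u) in constr:(0%N)
     | _ => let n := zlookup t l' in constr:(n.+1)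
     end
  end.
Ltac zappend t l :=
  lazymatch l with
  | [::] => constr:([:: t])
  | ?x :: ?l' => let r := zappend t l' in constr:(x :: r)
  end.
Ltac zlen l :=
  lazymatch l with
  | [::] => constr:(0%N)
  | _ :: ?l' => let n := zlen l' in constr:(n.+1)
  end.

Ltac zreify t env :=
  lazymatch t with
  | GRing.add ?a ?b =>
      let r := zreify a env in
      lazymatch r with (?ea, ?env1) =>
        let r2 := zreify b env1 in
        lazymatch r2 with (?eb, ?env2) => constr:((ZA ea eb, env2)) end end
  | GRing.opp ?a =>
      let r := zreify a env in
      lazymatch r with (?ea, ?env1) => constr:((ZN ea, env1)) end
  | GRing.zero => constr:((Z0, env))
  | _ =>
      match constr:(tt) with
      | _ => let n := zlookup t env in constr:((ZV n, env))
      | _ => let n := zlen env in let env' := zappend t env in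
             constr:((ZV n, env'))
      end
  end.

Ltac zmod_eq :=
  lazymatch goal with
  | |- @eq ?T ?lhs ?rhs =>
    let r := zreify lhs (@nil T) in
    lazymatch r with (?e1, ?env1) =>
      let r2 := zreify rhs env1 in
      lazymatch r2 with (?e2, ?env2) =>
        change (@zev _ env2 e1 = @zev _ env2 e2);
        apply: (@zsound _); vm_compute; reflexivity
      end end
  end.


Section Aux.
Variables (R : numFieldType) (F : comAlgType R) (V : lmodType F).

Lemma endo0 (P : V -> V) : bundle_endo P -> P 0 = 0.
Proof.
move=> H; have := H 1 0 0; rewrite scale1r !addr0 scale1r => /eqP.
by rewrite -subr_eq addrN eq_sym => /eqP.
Qed.
Lemma endoD (P : V -> V) : bundle_endo P -> forall x y, P (x + y) = P x + P y.
Proof. by move=> H x y; have := H 1 x y; rewrite !scale1r. Qed.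
Lemma endoZ (P : V -> V) : bundle_endo P -> forall (a : F) x, P (a *: x) = a *: P x.
Proof. by move=> H a x; have := H a x 0; rewrite !addr0 (endo0 _ H) addr0. Qed.
Lemma endoN (P : V -> V) : bundle_endo P -> forall x, P (- x) = - P x.
Proof. by move=> H x; rewrite -scaleN1r endoZ // scaleN1r. Qed.

Lemma fhalf2 (v : V) : @fhalf R F *: (2%:R *: v) = v.
Proof.
rewrite scalerA /fhalf -scalerAl mul1r -[2%:R]/(1 *+ 2) -scalerMnr scalerMnl.
have -> : (2%:R^-1 : R) *+ 2 = 1 by rewrite -(mulr_natr (2%:R^-1)) mulVf // pnatr_eq0.
by rewrite !scale1r.
Qed.
Lemma fhalf2' (v : V) : 2%:R *: (@fhalf R F *: v) = v.
Proof.
rewrite scalerA mulrC -scalerA.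
by rewrite -[X in X *: v]mulr1 -scalerA fhalf2 scale1r.
Qed.
Lemma two_add (v : V) : 2%:R *: v = v + v.
Proof. by rewrite scaler_nat mulr2n. Qed.
End Aux.

Theorem mainTheorem4 (R : numFieldType) (F : comAlgType R) (V : lmodType F)
    (rho : V -> F -> F) (pair : V -> V -> F) (circ : V -> V -> V) (D : F -> V)
    (I J K : V -> V) :
  is_courant_algebroid rho pair circ D ->
  almost_hypercomplex pair I J K ->
  forall X Y : V,
  [/\ covd (hc_nabla circ I J K) J X Y = 0,
      covd (hc_nabla circ I J K) I X Y =
        @fhalf R F *: K (nijenhuis circ I J X (I Y)) + @fhalf R F *: J (nijenhuis circ I J X Y) &
      circ X Y + @fhalf R F *: K (nijenhuis circ I J X Y) =
        hc_nabla circ I J K X Y - hc_nabla circ I J K Y X + D (pair X Y)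
        - (I (D (pair X (I Y))) + J (D (pair X (J Y))) + K (D (pair X (K Y))))].
Proof.
move=> [[psym [plin pnd]] [[rlin [rRl rleib]] [[cL cR] [[jac [rc [cleib [csym [dc rp]]]]] ddef]]]].
move=> [[eI eJ eK] oI oJ oK [II JJ KK IJK]] X Y.
have ID := @endoD R F V I eI; have JD := @endoD R F V J eJ; have KD := @endoD R F V K eK.
have IN := @endoN R F V I eI; have JN := @endoN R F V J eJ; have KN := @endoN R F V K eK.
have IZ := @endoZ R F V I eI; have JZ := @endoZ R F V J eJ; have KZ := @endoZ R F V K eK.
have IJ x : I (J x) = K x.
  by have := IJK (K x); rewrite KK JN IN => /oppr_inj.
have JK x : J (K x) = I x.
  by have := congr1 I (IJK x); rewrite II IN => /oppr_inj.
have IK x : I (K x) = - J x by rewrite -IJ II.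
have JI x : J (I x) = - K x by rewrite -JK JJ.
have KI x : K (I x) = J x by rewrite -IJ JI IN IK opprK.
have KJ x : K (J x) = - I x by rewrite -IJ JJ IN.
have a1 : (1 : R)%:A = 1 :> F by rewrite scale1r.
have aN1 : (-1 : R)%:A = -1 :> F by rewrite scaleN1r.
have c0l z : circ 0 z = 0.
  have := cL 1 0 0 z; rewrite a1 !scale1r !addr0 => /eqP.
  by rewrite -subr_eq addrN eq_sym => /eqP.
have c0r z : circ z 0 = 0.
  have := cR 1 z 0 0; rewrite a1 !scale1r !addr0 => /eqP.
  by rewrite -subr_eq addrN eq_sym => /eqP.
have cDl x y z : circ (x + y) z = circ x z + circ y z.
  by have := cL 1 x y z; rewrite a1 !scale1r.
have cDr x y z : circ z (x + y) = circ z x + circ z y.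
  by have := cR 1 z x y; rewrite a1 !scale1r.
have cNl x z : circ (- x) z = - circ x z.
  by have := cL (-1) x 0 z; rewrite aN1 ?c0l ?c0r !addr0 !scaleN1r.
have cNr x z : circ z (- x) = - circ z x.
  by have := cR (-1) z x 0; rewrite aN1 ?c0l ?c0r !addr0 !scaleN1r.
have sw a b : circ a b = 2%:R *: D (pair a b) - circ b a by rewrite -csym addrK.
have pD x y z : pair (x + y) z = pair x z + pair y z.
  by have := plin 1 x y z; rewrite scale1r mul1r.
have p0 z : pair 0 z = 0.
  have := pD 0 0 z; rewrite addr0 => /eqP.
  by rewrite -subr_eq addrN eq_sym => /eqP.
have pNl x z : pair (- x) z = - pair x z.
  by have := plin (-1) x 0 z; rewrite addr0 p0 addr0 scaleN1r mulN1r.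
have pNr x z : pair z (- x) = - pair z x by rewrite psym pNl psym.
have pIl a b : pair (I a) b = - pair a (I b) by rewrite -oI II pNl.
have pJl a b : pair (J a) b = - pair a (J b) by rewrite -oJ JJ pNl.
have pKl a b : pair (K a) b = - pair a (K b) by rewrite -oK KK pNl.
have rho0 x : rho x 0 = 0.
  have := rRl x 1 0 0; rewrite scale1r !addr0 scale1r => /eqP.
  by rewrite -subr_eq addrN eq_sym => /eqP.
have rhoN x f : rho x (- f) = - rho x f.
  by have := rRl x (-1) f 0; rewrite !addr0 rho0 addr0 !scaleN1r.
have DN f : D (- f) = - D f.
  apply/eqP; rewrite -subr_eq0 opprK; apply/eqP; apply: pnd => x.
  by rewrite psym pD !ddef rhoN mulrN addNr.
split.
- rewrite /covd /hc_nabla.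
  repeat progress rewrite ?ID ?JD ?KD ?IN ?JN ?KN ?IZ ?JZ ?KZ ?II ?JJ ?KK ?IJ ?JK ?KI ?JI ?KJ ?IK ?cDl ?cDr ?cNl ?cNr ?scalerDr ?scalerN ?opprK.
  zmod_eq.
- rewrite /covd /hc_nabla /nijenhuis.
  repeat progress rewrite ?ID ?JD ?KD ?IN ?JN ?KN ?IZ ?JZ ?KZ ?II ?JJ ?KK ?IJ ?JK ?KI ?JI ?KJ ?IK ?cDl ?cDr ?cNl ?cNr ?scalerDr ?scalerN ?opprK.
  rewrite (sw (K Y) (I X)) (sw (I Y) (I X)) (sw (K Y) X) (sw (I Y) X).
  rewrite (sw (J Y) (I X)) (sw Y (I X)) (sw (J Y) X) (sw Y X).
  rewrite ?pIl ?pJl ?pKl.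
  repeat progress rewrite ?ID ?JD ?KD ?IN ?JN ?KN ?IZ ?JZ ?KZ ?II ?JJ ?KK ?IJ ?JK ?KI ?JI ?KJ ?IK ?pNl ?pNr ?DN ?scalerDr ?scalerN ?opprK.
  rewrite ?(psym Y X) ?(psym Y (I X)) ?(psym Y (J X)) ?(psym Y (K X)) ?pIl ?pJl ?pKl.
  repeat progress rewrite ?ID ?JD ?KD ?IN ?JN ?KN ?IZ ?JZ ?KZ ?II ?JJ ?KK ?IJ ?JK ?KI ?JI ?KJ ?IK ?pNl ?pNr ?DN ?scalerDr ?scalerN ?opprK.
  zmod_eq.
- have H2 (a b : V) : 2%:R *: a = 2%:R *: b -> a = b.
    by move=> /(congr1 (fun v => @fhalf R F *: v)); rewrite !fhalf2.
  apply: H2.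
  rewrite /hc_nabla /nijenhuis.
  rewrite (sw (J Y) (I X)) (sw Y (I X)) (sw (J Y) X) (sw Y X).
  rewrite ?pIl ?pJl ?pKl.
  repeat progress rewrite ?ID ?JD ?KD ?IN ?JN ?KN ?IZ ?JZ ?KZ ?II ?JJ ?KK ?IJ ?JK ?KI ?JI ?KJ ?IK ?pNl ?pNr ?DN ?cDl ?cDr ?cNl ?cNr ?scalerDr ?scalerN ?opprK.
  rewrite ?(psym Y X) ?(psym Y (I X)) ?(psym Y (J X)) ?(psym Y (K X)) ?pIl ?pJl ?pKl.
  repeat progress rewrite ?ID ?JD ?KD ?IN ?JN ?KN ?IZ ?JZ ?KZ ?II ?JJ ?KK ?IJ ?JK ?KI ?JI ?KJ ?IK ?pNl ?pNr ?DN ?scalerDr ?scalerN ?opprK.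
  repeat progress rewrite ?fhalf2 ?fhalf2'.
  rewrite !two_add.
  zmod_eq.
Qed.
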